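(* Let $G$ be a finite simple undirected graph with $g(G)>\chi(G)$, where $g(G)$ is the girth of $G$ and $\chi(G)$ is the chromatic number of $G$, and let $\beta$ be any proper colouring of $G$. Then $G$ contains an induced path on $\chi(G)$ vertices whose vertices receive pairwise distinct colours under $\beta$.
   Context: A proper colouring $\beta$ of $G$ is a map from $V(G)$ to a set of colours such that $\beta(u)\neq\beta(v)$ for every edge $uv\in E(G)$; it need not use only $\chi(G)$ colours. The girth $g(G)$ is the length of a shortest cycle in $G$ (taken to be $\infty$ if $G$ has no cycle). A path is induced if no two non-consecutive vertices of the path are adjacent in $G$. *)

(* Defs.v *)
From mathcomp Require Import all_boot.
Set Implicit Arguments. Unset Strict Implicit. Unset Printing Implicit Defensive.

Section Graphs.
Variable T : finType.
Variable e : rel T.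

Definition simple_graph : Prop := symmetric e /\ irreflexive e.

Definition proper_colouring (C : Type) (beta : T -> C) : Prop :=
  forall x y, e x y -> beta x <> beta y.

Definition k_colourable (k : nat) : Prop :=
  exists f : T -> 'I_k, proper_colouring f.

Definition chromatic_number (k : nat) : Prop :=
  k_colourable k /\ forall j, k_colourable j -> k <= j.

Definition is_cycle (s : seq T) : Prop :=
  2 < size s /\ uniq s /\ cycle e s.

(* g(G) > k, where g(G) is the minimum length of a cycle (infinity if none) *)
Definition girth_gt (k : nat) : Prop :=
  forall s, is_cycle s -> k < size s.

Definition induced_path (p : seq T) : Prop :=
  uniq p /\ sorted e p /\
  forall (x0 : T) (i j : nat), i.+1 < j -> j < size p ->
    ~~ e (nth x0 p i) (nth x0 p j).
End Graphs.

(* Main.v *)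
Require Import Defs.
From mathcomp Require Import all_boot.
From mathcomp Require Import zify.

Set Implicit Arguments. Unset Strict Implicit.

Fixpoint G (T : finType) (d : rel T) (m : nat) (v : T) : nat :=
  if m is k.+1 then (\max_(u | d u v) G d k u).+1 else 1.

Section Aux.
Variable T : finType.
Variable d : rel T.
Variable r : T -> nat.
Hypothesis hd : forall u v, d u v -> r u < r v.

Lemma G_stable m1 : forall m2 v, r v <= m1 -> r v <= m2 -> G d m1 v = G d m2 v.
Proof.
elim: m1 => [|k IH] [|l] v /= h1 h2 //.
- rewrite big_pred0 // => u; apply/negP => /hd; lia.
- rewrite big_pred0 // => u; apply/negP => /hd; lia.
- congr S; apply: eq_bigr => u duv; have := hd duv => h; apply: IH; lia.
Qed.

Lemma G_lt u v : d u v -> G d (r u) u < G d (r v) v.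
Proof.
move=> duv; have := hd duv; case E: (r v) => [|k] // lt /=.
rewrite ltnS (@G_stable (r u) k) //.
by apply: leq_bigmax_cond.
Qed.
End Aux.

Lemma G_ge1 (T : finType) (d : rel T) m v : 0 < G d m v.
Proof. by case: m. Qed.

Lemma G_path (T : finType) (d : rel T) m : forall v,
  exists x s, [/\ path d x s, last x s = v & size s = (G d m v).-1].
Proof.
elim: m => [|k IH] v /=; first by exists v, [::].
have [c0|cpos] := posnP #|[pred u | d u v]|.
  exists v, [::]; split => //=.
  by rewrite big_pred0 // => u; have := card0_eq c0 u.
have [u uin ->] := eq_bigmax_cond (fun u => G d k u) cpos.
have [x [s [ps ls ss]]] := IH u.
exists x, (rcons s v); split.
- by rewrite rcons_path ps ls.
- by rewrite last_rcons.
- rewrite size_rcons ss /=; have := G_ge1 d k u; lia.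
Qed.

Theorem corollary1 (T : finType) (e : rel T) (C : eqType) (beta : T -> C) (chi : nat) :
  simple_graph e ->
  chromatic_number e chi ->
  girth_gt e chi ->
  proper_colouring e beta ->
  exists p : seq T, [/\ induced_path e p, size p = chi & uniq (map beta p)].
Proof.
move=> [esym eirr] [_ chimin] girth pb.
have [->|chipos] := posnP chi.
  by exists [::]; split => //; split => // x0 i j _ /=; case: j.
pose L := map beta (enum T).
pose r x := index (beta x) L.
have inL x : beta x \in L by apply: map_f; rewrite mem_enum.
have rne x y : e x y -> r x != r y.
  move=> exy; apply/negP => /eqP req; apply: (pb _ _ exy).
  by rewrite -(nth_index (beta x) (inL x)) -(nth_index (beta x) (inL y)) -/(r x) -/(r y) req.
pose d := [rel x y | e x y && (r x < r y)].
have hd : forall u v, d u v -> r u < r v by move=> u v /andP[].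
pose F v := G d (r v) v.
have Flt u v : d u v -> F u < F v by apply: (G_lt hd).
have Fge1 v : 0 < F v by apply: G_ge1.
have [/existsP [v hv]|hno] := boolP [exists v, chi <= F v]; last first.
  exfalso.
  have hc : k_colourable e chi.-1.
    have lt v : (F v).-1 < chi.-1.
      have : F v < chi by move/existsPn: hno => /(_ v); rewrite -ltnNge.
      have := Fge1 v; lia.
    exists (fun v => Ordinal (lt v)) => x y exy /(congr1 val) /= hxy.
    have := Fge1 x; have := Fge1 y.
    move: (rne x y exy); rewrite neq_ltn => /orP [h|h].
      have := Flt x y; rewrite /d /= exy h => /(_ isT); lia.
    have := Flt y x; rewrite /d /= (esym y x) exy h => /(_ isT); lia.
  have := chimin _ hc; lia.
have [x [s [ps ls ss]]] := G_path d (r v) v.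
pose q := x :: s.
have sq : size q = F v by rewrite /= ss /F; have := Fge1 v; rewrite /F; lia.
have pq : sorted d q by [].
have uq : uniq (map beta q).
  have : sorted ltn (map r q).
    by rewrite /= path_map; apply: sub_path pq => a b /hd.
  move=> /(sorted_uniq ltn_trans ltnn).
  by rewrite (map_comp (fun c => index c L) beta) => /map_uniq.
exists (drop (F v - chi) q).
have sz : size (drop (F v - chi) q) = chi by rewrite size_drop sq; lia.
split => //; last by rewrite map_drop drop_uniq.
set p := drop _ _.
have up : uniq p by apply: (@map_uniq _ _ beta); rewrite map_drop drop_uniq.
have sp : sorted e p.
  by apply: drop_sorted; apply: sub_sorted pq => a b /andP[].
split => //; split => // x0 i j ij jp; apply/negP => eij.
pose l := take (j - i) (drop i.+1 p).
pose a := nth x0 p i.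
have eq : take (j - i).+1 (drop i p) = a :: l.
  by rewrite (drop_nth x0) //; lia.
have := girth (a :: l); rewrite -eq.
have szq : size (take (j - i).+1 (drop i p)) = (j - i).+1.
  apply: size_takel; rewrite size_drop; lia.
rewrite szq.
have szp : size p = chi by exact: sz.
have H : ~ (chi < (j - i).+1) by lia.
move=> Hc; apply: H; apply: Hc; split; first by lia.
split; first by rewrite take_uniq // drop_uniq.
rewrite eq /= rcons_path.
have sl : sorted e (a :: l) by rewrite -eq take_sorted // drop_sorted.
move: sl => /= -> /=; rewrite (last_nth x0).
have -> : size l = j - i by rewrite -[size l]/((size (a :: l)).-1) -eq szq.
rewrite -eq nth_take; last by lia.
rewrite nth_drop.
have -> : i + (j - i) = j by lia.
by rewrite esym.
Qed.
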